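(* Let $X$ be a normed space and let $Y$ be a weakly sequentially complete Banach space ordered by a closed convex normal cone $K\subset Y$. Let $\alpha:\mathbb{R}_+\to\mathbb{R}_+$ be nondecreasing with $\lim_{t\to0^+}\alpha(t)/t=0$. Let $A\subset X$ be convex, let $k_0\in K\setminus\{0\}$, and let $F:X\to Y$ be strongly $\alpha(\cdot)$-$k_0$ paraconvex on $A$ with constant $C\ge 0$. Let $x_0\in A$ and $h\in X$ with $\|h\|=1$ be such that there is $\delta_0>0$ with $x_0+th\in A$ for all $t\in(-\delta_0,\delta_0)$. Then the directional derivative $$F'(x_0;h):=\lim_{t\to0^+}\frac{F(x_0+th)-F(x_0)}{t}$$ exists, the limit being taken in the norm topology of $Y$.
   Context: For a convex cone $K\subset Y$, write $x\le_K y$ iff $y-x\in K$. A cone $K$ in a normed space $Y$ is normal if there is a constant $c>0$ such that $0\le_K x\le_K y$ implies $\|x\|\le c\|y\|$. A mapping $F:X\to Y$ is strongly $\alpha(\cdot)$-$k_0$ paraconvex on a convex set $A\subset X$ with constant $C\ge0$ (where $k_0\in K$) if for all $x_1,x_2\in A$ and all $\lambda\in[0,1]$, $$F(\lambda x_1+(1-\lambda)x_2)\le_K \lambda F(x_1)+(1-\lambda)F(x_2)+C\min\{\lambda,1-\lambda\}\,\alpha(\|x_1-x_2\|)\,k_0.$$ *)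

(* Defs.v *)
From Stdlib Require Import Reals Lra.
Open Scope R_scope.

Record NormedSpace : Type := mkNormedSpace {
  ns_car :> Type;
  vzero : ns_car;
  vadd : ns_car -> ns_car -> ns_car;
  vopp : ns_car -> ns_car;
  vscal : R -> ns_car -> ns_car;
  vnorm : ns_car -> R;
  vadd_assoc : forall x y z, vadd x (vadd y z) = vadd (vadd x y) z;
  vadd_comm : forall x y, vadd x y = vadd y x;
  vadd_0 : forall x, vadd x vzero = x;
  vadd_opp : forall x, vadd x (vopp x) = vzero;
  vscal_1 : forall x, vscal 1 x = x;
  vscal_assoc : forall a b x, vscal a (vscal b x) = vscal (a * b) x;
  vscal_distr_v : forall a x y, vscal a (vadd x y) = vadd (vscal a x) (vscal a y);
  vscal_distr_r : forall a b x, vscal (a + b) x = vadd (vscal a x) (vscal b x);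
  vnorm_eq0 : forall x, vnorm x = 0 -> x = vzero;
  vnorm_scal : forall a x, vnorm (vscal a x) = Rabs a * vnorm x;
  vnorm_triangle : forall x y, vnorm (vadd x y) <= vnorm x + vnorm y
}.

Arguments vzero {n}.
Arguments vadd {n} _ _.
Arguments vopp {n} _.
Arguments vscal {n} _ _.
Arguments vnorm {n} _.

Definition vsub {X : NormedSpace} (x y : X) : X := vadd x (vopp y).

Definition seq_lim {X : NormedSpace} (u : nat -> X) (l : X) : Prop :=
  forall eps, 0 < eps -> exists N, forall n, (n >= N)%nat -> vnorm (vsub (u n) l) < eps.

Definition seq_cauchy {X : NormedSpace} (u : nat -> X) : Prop :=
  forall eps, 0 < eps -> exists N, forall m n, (m >= N)%nat -> (n >= N)%nat ->
    vnorm (vsub (u m) (u n)) < eps.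

Definition banach (X : NormedSpace) : Prop :=
  forall u : nat -> X, seq_cauchy u -> exists l, seq_lim u l.

Definition cont_lin_functional {X : NormedSpace} (f : X -> R) : Prop :=
  (forall x y, f (vadd x y) = f x + f y) /\
  (forall a x, f (vscal a x) = a * f x) /\
  (exists M, forall x, Rabs (f x) <= M * vnorm x).

Definition weakly_cauchy {X : NormedSpace} (u : nat -> X) : Prop :=
  forall f : X -> R, cont_lin_functional f -> Cauchy_crit (fun n => f (u n)).

Definition weakly_converges {X : NormedSpace} (u : nat -> X) (l : X) : Prop :=
  forall f : X -> R, cont_lin_functional f -> Un_cv (fun n => f (u n)) (f l).

Definition weakly_seq_complete (X : NormedSpace) : Prop :=
  forall u : nat -> X, weakly_cauchy u -> exists l, weakly_converges u l.

Definition convex_cone {Y : NormedSpace} (K : Y -> Prop) : Prop :=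
  K vzero /\
  (forall x y, K x -> K y -> K (vadd x y)) /\
  (forall t x, 0 <= t -> K x -> K (vscal t x)).

Definition ns_closed_set {Y : NormedSpace} (K : Y -> Prop) : Prop :=
  forall (u : nat -> Y) l, (forall n, K (u n)) -> seq_lim u l -> K l.

Definition cone_le {Y : NormedSpace} (K : Y -> Prop) (x y : Y) : Prop := K (vsub y x).

Definition normal_cone {Y : NormedSpace} (K : Y -> Prop) : Prop :=
  exists c, 0 < c /\ forall x y, cone_le K vzero x -> cone_le K x y -> vnorm x <= c * vnorm y.

Definition ns_convex_set {X : NormedSpace} (A : X -> Prop) : Prop :=
  forall x1 x2 lam, A x1 -> A x2 -> 0 <= lam <= 1 ->
    A (vadd (vscal lam x1) (vscal (1 - lam) x2)).

Definition strongly_paraconvex {X Y : NormedSpace} (K : Y -> Prop) (alpha : R -> R)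
    (k0 : Y) (F : X -> Y) (A : X -> Prop) (C : R) : Prop :=
  forall x1 x2 lam, A x1 -> A x2 -> 0 <= lam <= 1 ->
    cone_le K (F (vadd (vscal lam x1) (vscal (1 - lam) x2)))
      (vadd (vadd (vscal lam (F x1)) (vscal (1 - lam) (F x2)))
            (vscal (C * Rmin lam (1 - lam) * alpha (vnorm (vsub x1 x2))) k0)).

(* Hypotheses on alpha : R_+ -> R_+ (represented as R -> R, only values on [0,oo) matter). *)
Definition admissible_alpha (alpha : R -> R) : Prop :=
  (forall t, 0 <= t -> 0 <= alpha t) /\
  (forall s t, 0 <= s -> s <= t -> alpha s <= alpha t) /\
  (forall eps, 0 < eps -> exists d, 0 < d /\ forall t, 0 < t < d -> Rabs (alpha t / t) < eps).

(* Main.v *)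
Require Import Defs.
From Stdlib Require Import Reals Lra Lia Classical IndefiniteDescription.
From mathcomp Require boolp classical_sets.
Open Scope R_scope.

Arguments vadd_assoc {n}.
Arguments vadd_comm {n}.
Arguments vadd_0 {n}.
Arguments vadd_opp {n}.
Arguments vscal_1 {n}.
Arguments vscal_assoc {n}.
Arguments vscal_distr_v {n}.
Arguments vscal_distr_r {n}.
Arguments vnorm_eq0 {n}.
Arguments vnorm_scal {n}.
Arguments vnorm_triangle {n}.

Section VS.
Variable V : NormedSpace.
Implicit Types x y z : V.

Lemma v0l x : vadd vzero x = x.
Proof. rewrite vadd_comm; apply vadd_0. Qed.

Lemma vcancel x y z : vadd x y = vadd x z -> y = z.
Proof.
  intro H. rewrite <- (v0l y), <- (v0l z), <- (vadd_opp x), (vadd_comm x (vopp x)).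
  rewrite <- !vadd_assoc, H; reflexivity.
Qed.

Lemma vscal0 x : vscal 0 x = vzero.
Proof.
  apply (vcancel (vscal 0 x)). rewrite vadd_0, <- vscal_distr_r, Rplus_0_r; reflexivity.
Qed.

Lemma vscal_0 a : vscal a (@vzero V) = vzero.
Proof.
  apply (vcancel (vscal a vzero)). rewrite vadd_0, <- vscal_distr_v, vadd_0; reflexivity.
Qed.

Lemma vopp_scal x : vopp x = vscal (-1) x.
Proof.
  apply (vcancel x). rewrite vadd_opp. rewrite <- (vscal_1 x) at 1.
  rewrite <- vscal_distr_r. replace (1 + -1) with 0 by ring. rewrite vscal0; reflexivity.
Qed.

Lemma vnorm0 : vnorm (@vzero V) = 0.
Proof. rewrite <- (vscal0 vzero), vnorm_scal, Rabs_R0; ring. Qed.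

Lemma vnorm_opp x : vnorm (vopp x) = vnorm x.
Proof. rewrite vopp_scal, vnorm_scal. replace (Rabs (-1)) with 1. ring. rewrite Rabs_left; lra. Qed.

Lemma vnorm_ge0 x : 0 <= vnorm x.
Proof.
  pose proof (vnorm_triangle x (vopp x)) as H. rewrite vadd_opp, vnorm0, vnorm_opp in H. lra.
Qed.

End VS.

Inductive ve := V0 | V1 | V2 | V3 | V4 | VZ | VA (a b : ve) | VO (a : ve) | VS (r : R) (a : ve).

Record co := mkco { c0 : R; c1 : R; c2 : R; c3 : R; c4 : R }.

Section Refl.
Variable V : NormedSpace.
Variables u0 u1 u2 u3 u4 : V.

Fixpoint den (e : ve) : V :=
  match e with
  | V0 => u0 | V1 => u1 | V2 => u2 | V3 => u3 | V4 => u4 | VZ => vzero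
  | VA a b => vadd (den a) (den b)
  | VO a => vopp (den a)
  | VS r a => vscal r (den a)
  end.

Fixpoint nrm (e : ve) : co :=
  match e with
  | V0 => mkco 1 0 0 0 0 | V1 => mkco 0 1 0 0 0 | V2 => mkco 0 0 1 0 0
  | V3 => mkco 0 0 0 1 0 | V4 => mkco 0 0 0 0 1 | VZ => mkco 0 0 0 0 0
  | VA a b => let (a0,a1,a2,a3,a4) := nrm a in let (b0,b1,b2,b3,b4) := nrm b in
       mkco (a0+b0) (a1+b1) (a2+b2) (a3+b3) (a4+b4)
  | VO a => let (a0,a1,a2,a3,a4) := nrm a in mkco (-a0) (-a1) (-a2) (-a3) (-a4)
  | VS r a => let (a0,a1,a2,a3,a4) := nrm a in mkco (r*a0) (r*a1) (r*a2) (r*a3) (r*a4)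
  end.

Definition lc (c : co) : V :=
  vadd (vadd (vadd (vadd (vscal (c0 c) u0) (vscal (c1 c) u1)) (vscal (c2 c) u2))
     (vscal (c3 c) u3)) (vscal (c4 c) u4).

Lemma vadd_swap4 (a b c d : V) : vadd (vadd a b) (vadd c d) = vadd (vadd a c) (vadd b d).
Proof.
  rewrite !vadd_assoc. f_equal. rewrite <- !vadd_assoc. f_equal. apply vadd_comm.
Qed.

Lemma lc_add a b : vadd (lc a) (lc b) =
  lc (mkco (c0 a + c0 b) (c1 a + c1 b) (c2 a + c2 b) (c3 a + c3 b) (c4 a + c4 b)).
Proof.
  unfold lc; simpl. rewrite !vscal_distr_r. rewrite (vadd_swap4 (vadd (vadd (vadd _ _) _) _) (vscal (c4 a) u4)).
  rewrite (vadd_swap4 (vadd (vadd _ _) _) (vscal (c3 a) u3)).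
  rewrite (vadd_swap4 (vadd _ _) (vscal (c2 a) u2)).
  rewrite (vadd_swap4 (vscal (c0 a) u0) (vscal (c1 a) u1)). reflexivity.
Qed.

Lemma lc_scal r a : vscal r (lc a) =
  lc (mkco (r * c0 a) (r * c1 a) (r * c2 a) (r * c3 a) (r * c4 a)).
Proof.
  unfold lc; simpl. rewrite !vscal_distr_v, !vscal_assoc. reflexivity.
Qed.

Lemma den_nrm e : den e = lc (nrm e).
Proof.
  induction e; simpl.
  all: try (unfold lc; simpl; rewrite !vscal0, ?vscal_1, ?v0l, ?vadd_0; reflexivity).
  - rewrite IHe1, IHe2, lc_add. destruct (nrm e1), (nrm e2); reflexivity.
  - rewrite IHe, vopp_scal, lc_scal. destruct (nrm e); simpl; f_equal; f_equal; ring.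
  - rewrite IHe, lc_scal. destruct (nrm e); reflexivity.
Qed.

Lemma den_eq e1 e2 : let (a0,a1,a2,a3,a4) := nrm e1 in let (b0,b1,b2,b3,b4) := nrm e2 in
  a0 = b0 /\ a1 = b1 /\ a2 = b2 /\ a3 = b3 /\ a4 = b4 -> den e1 = den e2.
Proof.
  rewrite (den_nrm e1), (den_nrm e2). destruct (nrm e1), (nrm e2).
  intros (->&->&->&->&->); reflexivity.
Qed.
End Refl.

Ltac reify u0 u1 u2 u3 u4 t :=
  match t with
  | @vzero _ => constr:(VZ)
  | _ => let _ := match goal with _ => constr_eq t u0 end in constr:(V0)
  | _ => let _ := match goal with _ => constr_eq t u1 end in constr:(V1)
  | _ => let _ := match goal with _ => constr_eq t u2 end in constr:(V2)
  | _ => let _ := match goal with _ => constr_eq t u3 end in constr:(V3)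
  | _ => let _ := match goal with _ => constr_eq t u4 end in constr:(V4)
  | @vadd _ ?a ?b => let ra := reify u0 u1 u2 u3 u4 a in let rb := reify u0 u1 u2 u3 u4 b in constr:(VA ra rb)
  | @vsub _ ?a ?b => let ra := reify u0 u1 u2 u3 u4 a in let rb := reify u0 u1 u2 u3 u4 b in constr:(VA ra (VO rb))
  | @vopp _ ?a => let ra := reify u0 u1 u2 u3 u4 a in constr:(VO ra)
  | @vscal _ ?r ?a => let ra := reify u0 u1 u2 u3 u4 a in constr:(VS r ra)
  | @vzero _ => constr:(VZ)
  end.

(* vsolve u0 .. u4 : prove goal  x = y  leaving the 5 coefficient equations *)
Ltac vsolve u0 u1 u2 u3 u4 :=
  match goal with
  | |- @eq (ns_car ?V) ?x ?y =>
    let e1 := reify u0 u1 u2 u3 u4 x in let e2 := reify u0 u1 u2 u3 u4 y in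
    change (den V u0 u1 u2 u3 u4 e1 = den V u0 u1 u2 u3 u4 e2);
    apply (den_eq V u0 u1 u2 u3 u4 e1 e2); simpl; repeat split
  end.



Lemma le_eps (a b : R) : (forall eps, 0 < eps -> a <= b + eps) -> a <= b.
Proof.
  intros H. destruct (Rle_dec a b) as [|n]; auto. specialize (H ((a-b)/2)). lra.
Qed.

Definition is_inf (E : R -> Prop) (m : R) :=
  (forall r, E r -> m <= r) /\ (forall b, (forall r, E r -> b <= r) -> b <= m).

Lemma inf_ex (E : R -> Prop) : (exists r, E r) -> (exists b, forall r, E r -> b <= r) ->
  {m | is_inf E m}.
Proof.
  intros ne bd.
  destruct (completeness (fun r => E (- r))) as [l [H1 H2]].
  - destruct bd as [b Hb]. exists (-b). intros r Er. specialize (Hb _ Er). lra.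
  - destruct ne as [r Er]. exists (-r). rewrite Ropp_involutive; auto.
  - exists (-l). split.
    + intros r Er. assert (-r <= l). { apply H1. rewrite Ropp_involutive; auto. } lra.
    + intros b Hb. assert (l <= -b). { apply H2. intros r Er. specialize (Hb _ Er). lra. } lra.
Qed.

Lemma inf_approx E m : is_inf E m -> forall eps, 0 < eps -> exists r, E r /\ r < m + eps.
Proof.
  intros [H1 H2] eps Heps. apply NNPP. intro N.
  assert (m + eps <= m). { apply H2. intros r Er. destruct (Rlt_le_dec r (m+eps)); auto.
    exfalso; apply N; exists r; auto. }
  lra.
Qed.

Ltac vs1 a := match goal with |- @eq (ns_car ?V) _ _ => vsolve a (@vzero V) (@vzero V) (@vzero V) (@vzero V) end.
Ltac vs2 a b := match goal with |- @eq (ns_car ?V) _ _ => vsolve a b (@vzero V) (@vzero V) (@vzero V) end.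
Ltac vs3 a b c := match goal with |- @eq (ns_car ?V) _ _ => vsolve a b c (@vzero V) (@vzero V) end.
Ltac vs4 a b c d := match goal with |- @eq (ns_car ?V) _ _ => vsolve a b c d (@vzero V) end.

Lemma asb_i (P : Prop) : P -> is_true (boolp.asbool P).
Proof. intro H. destruct (boolp.asboolP P); auto. Qed.
Lemma asb_e (P : Prop) : is_true (boolp.asbool P) -> P.
Proof. intro H. destruct (boolp.asboolP P); auto. discriminate. Qed.

Section HB.
Variable V : NormedSpace.

Definition sublin (p : V -> R) :=
  (forall x y, p (vadd x y) <= p x + p y) /\ (forall a x, 0 < a -> p (vscal a x) <= a * p x).

Lemma sublin_hom p : sublin p -> forall a x, 0 < a -> p (vscal a x) = a * p x.
Proof.
  intros [Ha Hh] a x Hpos. apply Rle_antisym; auto.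
  assert (E : x = vscal (/a) (vscal a x)) by (vs1 x; field; lra).
  pose proof (Hh (/a) (vscal a x) (Rinv_0_lt_compat _ Hpos)). rewrite <- E in H.
  apply (Rmult_le_compat_l a) in H; [|lra]. rewrite <- Rmult_assoc, Rinv_r in H; lra.
Qed.

Lemma sublin_0 p : sublin p -> p vzero = 0.
Proof.
  intros [Ha Hh]. pose proof (Ha vzero vzero). rewrite vadd_0 in H.
  pose proof (Hh (/2) vzero). rewrite vscal_0 in H0. lra.
Qed.

Lemma sublin_scal p : sublin p -> forall a x, 0 <= a -> p (vscal a x) = a * p x.
Proof.
  intros Hs a x Ha. destruct (Req_dec a 0) as [->|].
  - rewrite vscal0, sublin_0; auto; ring.
  - apply sublin_hom; auto; lra.
Qed.

Lemma sublin_neg p : sublin p -> forall x, - p (vopp x) <= p x.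
Proof.
  intros Hs x. pose proof (proj1 Hs x (vopp x)). rewrite vadd_opp, sublin_0 in H; auto. lra.
Qed.

Definition TT := {q : V -> R | sublin q /\ forall x, q x <= 0}.

Theorem hahn_banach (p : V -> R) : sublin p ->
  exists g : V -> R, (forall x y, g (vadd x y) = g x + g y) /\
    (forall a x, g (vscal a x) = a * g x) /\ (forall x, g x <= p x).
Proof.
  intros Hp.
  pose (T := {q : V -> R | sublin q /\ forall x, q x <= p x}).
  pose (Rr := fun (s t : T) => boolp.asbool (forall x, proj1_sig t x <= proj1_sig s x)).
  assert (t0 : T) by (exists p; split; auto; intros; lra).
  destruct (@classical_sets.ZL_preorder T t0 Rr) as [t Ht].
  - intros s. apply asb_i. intros; lra.
  - intros r s t Hrs Hst. apply asb_i.
    apply asb_e in Hrs. apply asb_e in Hst. intros x. specialize (Hrs x); specialize (Hst x); lra.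
  - intros Aset Htot. destruct (classic (exists s, Aset s)) as [[s0 Hs0]|Hn].
    2:{ exists t0. intros s Hs; exfalso; apply Hn; eauto. }
    assert (LB : forall (s : T) y, - p (vopp y) <= proj1_sig s y).
    { intros [q [Hq Hqp]] y; simpl. pose proof (sublin_neg q Hq y). pose proof (Hqp (vopp y)). lra. }
    pose (E := fun y r => exists s, Aset s /\ r = proj1_sig s y).
    assert (ne : forall y, exists r, E y r) by (intros y; exists (proj1_sig s0 y); exists s0; auto).
    assert (bd : forall y, exists b, forall r, E y r -> b <= r).
    { intros y; exists (- p (vopp y)); intros r [s [_ ->]]; apply LB. }
    pose (b := fun y => proj1_sig (inf_ex (E y) (ne y) (bd y))).
    assert (Hb : forall y, is_inf (E y) (b y)) by (intros y; exact (proj2_sig (inf_ex (E y) (ne y) (bd y)))).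
    assert (Hbs : sublin b).
    { split.
      - intros x y. apply le_eps. intros eps Heps.
        destruct (inf_approx _ _ (Hb x) (eps/2)) as [r1 [[s1 [A1 ->]] L1]]; [lra|].
        destruct (inf_approx _ _ (Hb y) (eps/2)) as [r2 [[s2 [A2 ->]] L2]]; [lra|].
        destruct (Htot s1 s2 A1 A2) as [H12|H21].
        + apply asb_e in H12. pose proof (H12 x).
          destruct s2 as [q2 [Hq2 Hq2p]]; simpl in *.
          pose proof (proj1 (Hb (vadd x y)) (q2 (vadd x y)) (ex_intro _ _ (conj A2 eq_refl))).
          pose proof (proj1 Hq2 x y). lra.
        + apply asb_e in H21. pose proof (H21 y).
          destruct s1 as [q1 [Hq1 Hq1p]]; simpl in *.
          pose proof (proj1 (Hb (vadd x y)) (q1 (vadd x y)) (ex_intro _ _ (conj A1 eq_refl))).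
          pose proof (proj1 Hq1 x y). lra.
      - intros a x Ha.
        assert (b (vscal a x) / a <= b x).
        { apply (proj2 (Hb x)). intros r [s [As ->]].
          pose proof (proj1 (Hb (vscal a x)) (proj1_sig s (vscal a x)) (ex_intro _ _ (conj As eq_refl))).
          destruct s as [q [Hq Hqp]]; simpl in *. rewrite (sublin_hom q Hq) in H; auto.
          apply (Rmult_le_reg_l a); auto. replace (a * (b (vscal a x) / a)) with (b (vscal a x)) by (field; lra); lra. }
        apply (Rmult_le_compat_l a) in H; [|lra].
        replace (a * (b (vscal a x) / a)) with (b (vscal a x)) in H by (field; lra); lra. }
    assert (Hbp : forall y, b y <= p y).
    { intros y. pose proof (proj1 (Hb y) _ (ex_intro _ s0 (conj Hs0 eq_refl))).
      pose proof (proj2 (proj2_sig s0) y). simpl in *. lra. }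
    exists (exist _ b (conj Hbs Hbp)). intros s As. apply asb_i. intros y; simpl.
    exact (proj1 (Hb y) _ (ex_intro _ s (conj As eq_refl))).
  - destruct t as [q [Hq Hqp]]. unfold classical_sets.premaximal in Ht.
    assert (Hneg : forall x, q (vopp x) = - q x).
    { intros x.
      pose (E := fun y r => exists t, 0 <= t /\ r = q (vadd y (vscal t x)) - t * q x).
      assert (ne : forall y, exists r, E y r) by (intros y; exists (q (vadd y (vscal 0 x)) - 0 * q x); exists 0; split; auto; lra).
      assert (bd : forall y, exists b, forall r, E y r -> b <= r).
      { intros y; exists (- q (vopp y)); intros r [t [Ht0 ->]].
        pose proof (proj1 Hq (vadd y (vscal t x)) (vopp y)).
        replace (vadd (vadd y (vscal t x)) (vopp y)) with (vscal t x) in H by (vs2 x y; ring).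
        rewrite sublin_scal in H; auto. lra. }
      pose (r := fun y => proj1_sig (inf_ex (E y) (ne y) (bd y))).
      assert (Hr : forall y, is_inf (E y) (r y)) by (intros y; exact (proj2_sig (inf_ex (E y) (ne y) (bd y)))).
      assert (Hrq : forall y, r y <= q y).
      { intros y. apply (proj1 (Hr y)). exists 0. split; [lra|].
        rewrite vscal0, vadd_0; ring. }
      assert (Hrs : sublin r).
      { split.
        - intros y1 y2. apply le_eps. intros eps Heps.
          destruct (inf_approx _ _ (Hr y1) (eps/2)) as [r1 [[t1 [T1 ->]] L1]]; [lra|].
          destruct (inf_approx _ _ (Hr y2) (eps/2)) as [r2 [[t2 [T2 ->]] L2]]; [lra|].
          assert (r (vadd y1 y2) <= q (vadd (vadd y1 y2) (vscal (t1+t2) x)) - (t1+t2) * q x).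
          { apply (proj1 (Hr _)). exists (t1+t2); split; auto; lra. }
          pose proof (proj1 Hq (vadd y1 (vscal t1 x)) (vadd y2 (vscal t2 x))).
          replace (vadd (vadd y1 (vscal t1 x)) (vadd y2 (vscal t2 x))) with
            (vadd (vadd y1 y2) (vscal (t1+t2) x)) in H0 by (vs3 x y1 y2; ring).
          lra.
        - intros a y Ha.
          assert (r (vscal a y) / a <= r y).
          { apply (proj2 (Hr y)). intros e [t [Ht0 ->]].
            assert (r (vscal a y) <= q (vadd (vscal a y) (vscal (a*t) x)) - (a*t) * q x).
            { apply (proj1 (Hr _)). exists (a*t); split; auto. apply Rmult_le_pos; lra. }
            replace (vadd (vscal a y) (vscal (a*t) x)) with (vscal a (vadd y (vscal t x))) in H
              by (vs2 x y; ring).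
            rewrite (sublin_hom q Hq) in H; auto.
            apply (Rmult_le_reg_l a); auto. replace (a * (r (vscal a y) / a)) with (r (vscal a y)) by (field; lra); lra. }
          apply (Rmult_le_compat_l a) in H; [|lra].
          replace (a * (r (vscal a y) / a)) with (r (vscal a y)) in H by (field; lra); lra. }
      assert (Hrp : forall y, r y <= p y) by (intros y; pose proof (Hrq y); pose proof (Hqp y); lra).
      specialize (Ht (exist _ r (conj Hrs Hrp)) (asb_i _ Hrq)). apply asb_e in Ht. simpl in Ht.
      assert (r (vopp x) <= q (vadd (vopp x) (vscal 1 x)) - 1 * q x).
      { apply (proj1 (Hr _)). exists 1; split; auto; lra. }
      rewrite vscal_1, vadd_comm, vadd_opp, sublin_0 in H; auto.
      pose proof (Ht (vopp x)). pose proof (sublin_neg q Hq x). lra. }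
    exists q. split; [|split]; auto.
    + intros x y. apply Rle_antisym; [apply Hq|].
      pose proof (proj1 Hq (vadd x y) (vopp y)).
      replace (vadd (vadd x y) (vopp y)) with x in H by (vs2 x y; ring).
      rewrite Hneg in H; lra.
    + intros a x. destruct (Rle_dec 0 a). { apply sublin_scal; auto. }
      replace (vscal a x) with (vopp (vscal (-a) x)) by (vs1 x; ring).
      rewrite Hneg, sublin_scal; auto; lra.
Qed.
End HB.


Lemma vnorm_tri_sub (V : NormedSpace) (a b : V) : vnorm a - vnorm b <= vnorm (vadd a b) + 0 * vnorm b + 0 -> True.
Proof. auto. Qed.

Theorem separation (V : NormedSpace) (D : V -> Prop) (rho : R) : 0 < rho -> (exists z, D z) ->
  (forall z1 z2 l, D z1 -> D z2 -> 0 <= l <= 1 -> D (vadd (vscal l z1) (vscal (1-l) z2))) ->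
  (forall z, D z -> rho <= vnorm z) ->
  exists f, cont_lin_functional f /\ forall z, D z -> rho <= f z.
Proof.
  intros Hrho [z0 Hz0] Hconv Hnorm.
  pose (E := fun (y : V) r => exists l z, 0 <= l /\ D z /\ r = vnorm (vadd y (vscal l z)) - l * rho).
  assert (ne : forall y, exists r, E y r) by (intros y; eexists; exists 0, z0; split; [lra|split; [auto|reflexivity]]).
  assert (bd : forall y, exists b, forall r, E y r -> b <= r).
  { intros y; exists (- vnorm y); intros r [l [z [Hl [Dz ->]]]].
    pose proof (vnorm_triangle (vadd y (vscal l z)) (vopp y)).
    replace (vadd (vadd y (vscal l z)) (vopp y)) with (vscal l z) in H by (vs2 y z; ring).
    rewrite vnorm_scal, vnorm_opp, Rabs_pos_eq in H; auto.
    pose proof (Hnorm z Dz). pose proof (Rmult_le_compat_l l _ _ Hl H0). lra. }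
  pose (p := fun y => proj1_sig (inf_ex (E y) (ne y) (bd y))).
  assert (Hp : forall y, is_inf (E y) (p y)) by (intros y; exact (proj2_sig (inf_ex (E y) (ne y) (bd y)))).
  assert (Hpn : forall y, p y <= vnorm y).
  { intros y. apply (proj1 (Hp y)). exists 0, z0. split; [lra|split; auto].
    rewrite vscal0, vadd_0; ring. }
  assert (Hps : sublin V p).
  { split.
    - intros y1 y2. apply le_eps. intros eps Heps.
      destruct (inf_approx _ _ (Hp y1) (eps/2)) as [r1 [[l1 [z1 [L1 [D1 ->]]]] A1]]; [lra|].
      destruct (inf_approx _ _ (Hp y2) (eps/2)) as [r2 [[l2 [z2 [L2 [D2 ->]]]] A2]]; [lra|].
      destruct (Req_dec (l1 + l2) 0) as [H0|H0].
      + assert (l1 = 0) by lra. assert (l2 = 0) by lra. subst l1 l2.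
        assert (p (vadd y1 y2) <= vnorm (vadd (vadd y1 y2) (vscal 0 z1)) - 0 * rho).
        { apply (proj1 (Hp _)). exists 0, z1; split; [lra|split; auto]. }
        rewrite !vscal0, !vadd_0 in *. pose proof (vnorm_triangle y1 y2). lra.
      + set (m := l1 / (l1 + l2)).
        assert (Hm : 0 <= m <= 1).
        { unfold m; split. unfold Rdiv; apply Rmult_le_pos; [lra|left; apply Rinv_0_lt_compat; lra].
          apply Rmult_le_reg_r with (l1+l2); [lra|]. unfold Rdiv. rewrite Rmult_assoc, Rinv_l; lra. }
        pose (z := vadd (vscal m z1) (vscal (1-m) z2)).
        assert (p (vadd y1 y2) <= vnorm (vadd (vadd y1 y2) (vscal (l1+l2) z)) - (l1+l2) * rho).
        { apply (proj1 (Hp _)). exists (l1+l2), z; split; [lra|split; auto]. apply Hconv; auto. }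
        replace (vadd (vadd y1 y2) (vscal (l1+l2) z)) with (vadd (vadd y1 (vscal l1 z1)) (vadd y2 (vscal l2 z2))) in H
          by (unfold z, m; vs4 y1 y2 z1 z2; field; lra).
        pose proof (vnorm_triangle (vadd y1 (vscal l1 z1)) (vadd y2 (vscal l2 z2))). lra.
    - intros a y Ha.
      assert (p (vscal a y) / a <= p y).
      { apply (proj2 (Hp y)). intros e [l [z [Hl [Dz ->]]]].
        assert (p (vscal a y) <= vnorm (vadd (vscal a y) (vscal (a*l) z)) - (a*l) * rho).
        { apply (proj1 (Hp _)). exists (a*l), z; split; [apply Rmult_le_pos; lra|split; auto]. }
        replace (vadd (vscal a y) (vscal (a*l) z)) with (vscal a (vadd y (vscal l z))) in H
          by (vs2 y z; ring).
        rewrite vnorm_scal, Rabs_pos_eq in H; [|lra].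
        apply (Rmult_le_reg_l a); auto. replace (a * (p (vscal a y) / a)) with (p (vscal a y)) by (field; lra); lra. }
      apply (Rmult_le_compat_l a) in H; [|lra].
      replace (a * (p (vscal a y) / a)) with (p (vscal a y)) in H by (field; lra); lra. }
  destruct (hahn_banach V p Hps) as [g [Hadd [Hhom Hgp]]].
  assert (Hopp : forall x, g (vopp x) = - g x) by (intros x; rewrite vopp_scal, Hhom; ring).
  exists g. split; [split; [auto|split; auto]|].
  - exists 1. intros x. apply Rabs_le. split.
    + pose proof (Hgp (vopp x)). pose proof (Hpn (vopp x)). rewrite Hopp, vnorm_opp in *. lra.
    + pose proof (Hgp x). pose proof (Hpn x). lra.
  - intros z Dz. pose proof (Hgp (vopp z)).
    assert (p (vopp z) <= vnorm (vadd (vopp z) (vscal 1 z)) - 1 * rho).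
    { apply (proj1 (Hp _)). exists 1, z; split; [lra|split; auto]. }
    rewrite vscal_1, vadd_comm, vadd_opp, vnorm0 in H0. rewrite Hopp in H. lra.
Qed.


Fixpoint ssum (f : nat -> R) (N : nat) : R :=
  match N with O => 0 | S n => ssum f n + f n end.

Lemma ssum_le f g N : (forall n, f n <= g n) -> ssum f N <= ssum g N.
Proof. intros H; induction N; simpl; [lra|]. specialize (H N); lra. Qed.

Lemma ssum_geom N : ssum (fun n => (/2)^n) N = 2 - 2 * (/2)^N.
Proof. induction N; simpl; [lra|]. rewrite IHN. field. Qed.

Lemma ssum_geom_le N : ssum (fun n => (/2)^n) N <= 2.
Proof. rewrite ssum_geom. pose proof (pow_le (/2) N). lra. Qed.

Lemma ssum_mono f m n : (forall k, 0 <= f k) -> (n <= m)%nat -> ssum f n <= ssum f m.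
Proof.
  intros H Hnm. induction Hnm; [lra|]. simpl. specialize (H m). lra.
Qed.

Lemma cauchy_of_bv (a : nat -> R) (B : R) :
  (forall N, ssum (fun n => Rabs (a (S n) - a n)) N <= B) -> Cauchy_crit a.
Proof.
  intros HB. set (S' := ssum (fun n => Rabs (a (S n) - a n))).
  assert (HS : Cauchy_crit S').
  { apply CV_Cauchy. apply growing_cv.
    - intros n. unfold S'; simpl. pose proof (Rabs_pos (a (S n) - a n)). lra.
    - exists B. intros r [i ->]. apply HB. }
  assert (Hd : forall n m, (n <= m)%nat -> Rabs (a m - a n) <= S' m - S' n).
  { intros n m Hnm. induction Hnm.
    - replace (a n - a n) with 0 by ring. rewrite Rabs_R0; lra.
    - unfold S' in *; simpl.
      replace (a (S m) - a n) with ((a (S m) - a m) + (a m - a n)) by ring.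
      pose proof (Rabs_triang (a (S m) - a m) (a m - a n)). lra. }
  intros eps Heps. destruct (HS eps Heps) as [N HN]. exists N. intros n m Hn Hm.
  specialize (HN n m Hn Hm). unfold Rdist in *.
  destruct (Nat.le_ge_cases n m) as [Hnm|Hnm].
  - specialize (Hd n m Hnm). rewrite Rabs_minus_sym.
    assert (S' n <= S' m) by (apply ssum_mono; auto; intros; apply Rabs_pos).
    rewrite Rabs_minus_sym, Rabs_pos_eq in HN; lra.
  - specialize (Hd m n Hnm).
    assert (S' m <= S' n) by (apply ssum_mono; auto; intros; apply Rabs_pos).
    rewrite Rabs_pos_eq in HN; lra.
Qed.

Lemma closed_gap (V : NormedSpace) (K : V -> Prop) (z : V) :
  ns_closed_set K -> ~ K z -> exists rho, 0 < rho /\ forall k, K k -> rho <= vnorm (vsub k z).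
Proof.
  intros Hcl Hz. apply NNPP. intro N.
  assert (H : forall n : nat, exists k, K k /\ vnorm (vsub k z) < / INR (S n)).
  { intros n. apply NNPP. intro N2. apply N. exists (/ INR (S n)). split.
    - apply Rinv_0_lt_compat, lt_0_INR; lia.
    - intros k Kk. destruct (Rle_dec (/ INR (S n)) (vnorm (vsub k z))); auto.
      exfalso; apply N2; exists k; split; auto; lra. }
  pose (u := fun n => proj1_sig (constructive_indefinite_description _ (H n))).
  assert (Hu : forall n, K (u n) /\ vnorm (vsub (u n) z) < / INR (S n))
    by (intros n; exact (proj2_sig (constructive_indefinite_description _ (H n)))).
  apply Hz, (Hcl u z); [intros n; apply Hu|].
  intros eps Heps. destruct (archimed_cor1 eps Heps) as [N0 [HN0 HN0p]].
  exists N0. intros n Hn. pose proof (proj2 (Hu n)).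
  assert (/ INR (S n) <= / INR N0).
  { apply Rinv_le_contravar. apply lt_0_INR; lia. apply le_INR; lia. }
  lra.
Qed.

Fixpoint vsum {V : NormedSpace} (y : nat -> V) (N : nat) : V :=
  match N with O => vzero | S n => vadd (vsum y n) (y n) end.
Fixpoint vsumP {V : NormedSpace} (f : V -> R) (y : nat -> V) (N : nat) : V :=
  match N with O => vzero | S n => if Rle_dec 0 (f (y n)) then vadd (vsumP f y n) (y n) else vsumP f y n end.
Fixpoint vsumN {V : NormedSpace} (f : V -> R) (y : nat -> V) (N : nat) : V :=
  match N with O => vzero | S n => if Rle_dec 0 (f (y n)) then vsumN f y n else vadd (vsumN f y n) (y n) end.

Lemma clf_opp (V : NormedSpace) (f : V -> R) : cont_lin_functional f -> forall x, f (vopp x) = - f x.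
Proof. intros [Ha [Hh _]] x. rewrite vopp_scal, Hh; ring. Qed.
Lemma clf_sub (V : NormedSpace) (f : V -> R) : cont_lin_functional f -> forall x y, f (vsub x y) = f x - f y.
Proof. intros Hf x y. unfold vsub. rewrite (proj1 Hf), clf_opp; auto; ring. Qed.

Lemma weak_cauchy_lemma (V : NormedSpace) (K : V -> Prop) (c : R) (u : nat -> V) (k0 L : V) (er : nat -> R) :
  convex_cone K -> 0 < c ->
  (forall x y, cone_le K vzero x -> cone_le K x y -> vnorm x <= c * vnorm y) ->
  K k0 -> (forall n, 0 <= er n <= (/2)^n) ->
  (forall n, K (vadd (vsub (u n) (u (S n))) (vscal (er n) k0))) ->
  (forall n, K (vsub (u n) L)) ->
  weakly_cauchy u.
Proof.
  intros [K0 [Kadd Kscal]] Hc Hnorm Kk0 Her Hinc Hlow f Hf.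
  pose proof Hf as [Hfa [Hfh [M HM]]].
  set (y := fun n => vadd (vsub (u n) (u (S n))) (vscal (er n) k0)).
  assert (ES : forall N, ssum er N <= 2).
  { intros N. eapply Rle_trans; [|apply (ssum_geom_le N)]. apply ssum_le. intros n; apply Her. }
  assert (Hvs : forall N, vsum y N = vadd (vsub (u 0%nat) (u N)) (vscal (ssum er N) k0)).
  { induction N; simpl.
    - vs2 (u 0%nat) k0; ring.
    - rewrite IHN. unfold y. vs4 (u 0%nat) (u N) (u (S N)) k0; ring. }
  set (U := vadd (vsub (u 0%nat) L) (vscal 2 k0)).
  assert (HU : forall N, K (vsub U (vsum y N))).
  { intros N. rewrite Hvs.
    replace (vsub U (vadd (vsub (u 0%nat) (u N)) (vscal (ssum er N) k0))) with
      (vadd (vsub (u N) L) (vscal (2 - ssum er N) k0)) by (unfold U; vs4 (u 0%nat) (u N) L k0; ring).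
    apply Kadd; auto. apply Kscal; auto. specialize (ES N); lra. }
  assert (HPN : forall N, vadd (vsumP f y N) (vsumN f y N) = vsum y N /\ K (vsumP f y N) /\ K (vsumN f y N)
     /\ f (vsumP f y N) - f (vsumN f y N) = ssum (fun n => Rabs (f (y n))) N).
  { induction N as [|N [IH1 [IH2 [IH3 IH4]]]]; simpl.
    - rewrite vadd_0. repeat split; auto. replace (vzero) with (vscal 0 (@vzero V)) by apply vscal0.
      rewrite Hfh; ring.
    - assert (Ky : K (y N)) by apply Hinc.
      destruct (Rle_dec 0 (f (y N))).
      + repeat split; auto.
        * rewrite <- IH1. vs3 (vsumP f y N) (vsumN f y N) (y N); ring.
        * rewrite Hfa, Rabs_pos_eq; auto; lra.
      + repeat split; auto.
        * rewrite <- IH1. vs3 (vsumP f y N) (vsumN f y N) (y N); ring.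
        * rewrite Hfa, Rabs_left; lra. }
  set (M' := Rabs M).
  assert (HM' : forall x, Rabs (f x) <= M' * vnorm x).
  { intros x. eapply Rle_trans; [apply HM|]. apply Rmult_le_compat_r; [apply vnorm_ge0|apply RRle_abs]. }
  assert (Hb : forall N, ssum (fun n => Rabs (f (y n))) N <= 2 * M' * c * vnorm U).
  { intros N. destruct (HPN N) as [E1 [KP [KN E4]]]. rewrite <- E4.
    assert (vnorm (vsumP f y N) <= c * vnorm U).
    { apply Hnorm; unfold cone_le.
      - replace (vsub (vsumP f y N) vzero) with (vsumP f y N) by (vs1 (vsumP f y N); ring); auto.
      - replace (vsub U (vsumP f y N)) with (vadd (vsub U (vsum y N)) (vsumN f y N))
          by (rewrite <- E1; vs3 U (vsumP f y N) (vsumN f y N); ring). apply Kadd; auto. }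
    assert (vnorm (vsumN f y N) <= c * vnorm U).
    { apply Hnorm; unfold cone_le.
      - replace (vsub (vsumN f y N) vzero) with (vsumN f y N) by (vs1 (vsumN f y N); ring); auto.
      - replace (vsub U (vsumN f y N)) with (vadd (vsub U (vsum y N)) (vsumP f y N))
          by (rewrite <- E1; vs3 U (vsumP f y N) (vsumN f y N); ring). apply Kadd; auto. }
    pose proof (HM' (vsumP f y N)). pose proof (HM' (vsumN f y N)).
    assert (0 <= M') by apply Rabs_pos.
    pose proof (Rmult_le_compat_l M' _ _ H3 H). pose proof (Rmult_le_compat_l M' _ _ H3 H0).
    pose proof (Rle_abs (f (vsumP f y N))). pose proof (Rle_abs (- f (vsumN f y N))). rewrite Rabs_Ropp in H7.
    lra. }
  apply (cauchy_of_bv _ (2 * M' * c * vnorm U + 2 * Rabs (f k0))).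
  intros N. eapply Rle_trans.
  - apply (ssum_le _ (fun n => Rabs (f (y n)) + (/2)^n * Rabs (f k0))).
    intros n. unfold y. rewrite Hfa, clf_sub, Hfh; auto.
    replace (f (u (S n)) - f (u n)) with (- ((f (u n) - f (u (S n)) + er n * f k0)) + er n * f k0) by ring.
    eapply Rle_trans; [apply Rabs_triang|]. rewrite Rabs_Ropp, Rabs_mult.
    apply Rplus_le_compat_l. apply Rmult_le_compat_r; [apply Rabs_pos|].
    rewrite Rabs_pos_eq; apply Her.
  - assert (forall N, ssum (fun n => Rabs (f (y n)) + (/2)^n * Rabs (f k0)) N =
        ssum (fun n => Rabs (f (y n))) N + ssum (fun n => (/2)^n) N * Rabs (f k0)).
    { induction N0; simpl; [ring|]. rewrite IHN0; ring. }
    rewrite H. pose proof (Hb N). pose proof (ssum_geom_le N).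
    pose proof (Rmult_le_compat_r (Rabs (f k0)) _ _ (Rabs_pos _) H1). lra.
Qed.


Fixpoint tseq (t0 : R) (D : nat -> R) (n : nat) : R :=
  match n with O => Rmin t0 (D O) / 2 | S m => Rmin (tseq t0 D m) (D (S m)) / 2 end.

Lemma tseq_props t0 D : 0 < t0 -> (forall n, 0 < D n) -> forall n,
  0 < tseq t0 D n /\ tseq t0 D n < D n /\ tseq t0 D n <= t0 * (/2)^(S n) /\ tseq t0 D (S n) < tseq t0 D n.
Proof.
  intros Ht0 HD n. induction n as [|n IH].
  - simpl. pose proof (HD 0%nat); pose proof (HD 1%nat).
    unfold Rmin; repeat destruct Rle_dec; simpl in *; repeat split; lra.
  - destruct IH as [I1 [I2 [I3 I4]]].
    assert (tseq t0 D (S n) = Rmin (tseq t0 D n) (D (S n)) / 2) by reflexivity.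
    assert (tseq t0 D (S (S n)) = Rmin (tseq t0 D (S n)) (D (S (S n))) / 2) by reflexivity.
    pose proof (HD (S n)); pose proof (HD (S (S n))).
    assert (0 < tseq t0 D (S n)) by (rewrite H; unfold Rmin; destruct Rle_dec; lra).
    repeat split; auto.
    + rewrite H; unfold Rmin; destruct Rle_dec; lra.
    + rewrite H. replace (t0 * (/2)^(S (S n))) with (t0 * (/2)^(S n) / 2) by (simpl; field).
      unfold Rmin; destruct Rle_dec; lra.
    + rewrite H0; unfold Rmin; destruct Rle_dec; lra.
Qed.

Lemma tseq_mono t0 D : 0 < t0 -> (forall n, 0 < D n) -> forall n m, (n <= m)%nat -> tseq t0 D m <= tseq t0 D n.
Proof.
  intros Ht0 HD n m Hnm. induction Hnm; [lra|].
  pose proof (tseq_props t0 D Ht0 HD m). lra.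
Qed.

Lemma pow_half_small (y : R) : 0 < y -> exists N, forall n, (n >= N)%nat -> (/2)^n < y.
Proof.
  intros Hy. destruct (pow_lt_1_zero (/2)) with (y := y) as [N HN]; auto.
  { rewrite Rabs_pos_eq; lra. }
  exists N. intros n Hn. specialize (HN n Hn). rewrite Rabs_pos_eq in HN; auto. apply pow_le; lra.
Qed.

Lemma tseq_to0 t0 D : 0 < t0 -> (forall n, 0 < D n) -> forall eta, 0 < eta ->
  exists N, forall n, (n >= N)%nat -> tseq t0 D n < eta.
Proof.
  intros Ht0 HD eta Heta. destruct (pow_half_small (eta / t0)) as [N HN].
  { apply Rdiv_lt_0_compat; auto. }
  exists N. intros n Hn. destruct (tseq_props t0 D Ht0 HD n) as [_ [_ [H3 _]]].
  specialize (HN n Hn). simpl in H3.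
  assert (t0 * (/2)^n < eta).
  { apply (Rmult_lt_compat_l t0) in HN; auto. replace (t0 * (eta / t0)) with eta in HN by (field; lra). lra. }
  pose proof (pow_le (/2) n). nra.
Qed.

Lemma Kcomb (V : NormedSpace) (K : V -> Prop) (k0 w z : V) (a b : R) : convex_cone K -> K k0 ->
  K w -> 0 <= a -> 0 <= b -> z = vadd (vscal a w) (vscal b k0) -> K z.
Proof.
  intros [_ [Kadd Kscal]] Kk0 Kw Ha Hb ->. apply Kadd; apply Kscal; auto.
Qed.

Lemma pow_half_le1 n : (/2)^n <= 1.
Proof. induction n; simpl; [lra|]. pose proof (pow_le (/2) n). lra. Qed.


Theorem theorem4p2 (X Y : NormedSpace) (K : Y -> Prop) (alpha : R -> R)
  (A : X -> Prop) (k0 : Y) (F : X -> Y) (C : R) (x0 h : X) :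
  banach Y -> weakly_seq_complete Y ->
  convex_cone K -> ns_closed_set K -> normal_cone K ->
  admissible_alpha alpha ->
  ns_convex_set A ->
  K k0 -> k0 <> vzero ->
  0 <= C -> strongly_paraconvex K alpha k0 F A C ->
  A x0 -> vnorm h = 1 ->
  (exists delta0, 0 < delta0 /\
     forall t, - delta0 < t < delta0 -> A (vadd x0 (vscal t h))) ->
  exists d : Y, forall eps, 0 < eps -> exists delta, 0 < delta /\
    forall t, 0 < t < delta ->
      vnorm (vsub (vscal (/ t) (vsub (F (vadd x0 (vscal t h))) (F x0))) d) < eps.
Proof.
  intros HBan HW Hcone Hcl [c [Hc Hnorm]] [Ha0 [Hamono Halim]] HAconv Kk0 k0ne HC Hpc Ax0 Hh [d0 [Hd0 HA]].
  pose proof Hcone as [K0 [Kadd Kscal]].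
  pose (xt := fun t => vadd x0 (vscal t h)).
  pose (q := fun t => vscal (/t) (vsub (F (xt t)) (F x0))).
  pose (e := fun t => C * (alpha t / t)).
  assert (He0 : forall t, 0 < t -> 0 <= e t).
  { intros t Ht. unfold e. apply Rmult_le_pos; auto. unfold Rdiv. apply Rmult_le_pos; [apply Ha0; lra|].
    left; apply Rinv_0_lt_compat; auto. }
  assert (Hcomb : forall l a b, vadd (vscal l (xt a)) (vscal (1-l) (xt b)) = xt (l*a + (1-l)*b)).
  { intros l a b. unfold xt. vs2 x0 h; ring. }
  assert (Hdist : forall a b, vnorm (vsub (xt a) (xt b)) = Rabs (a - b)).
  { intros a b. replace (vsub (xt a) (xt b)) with (vscal (a - b) h) by (unfold xt; vs2 x0 h; ring).
    rewrite vnorm_scal, Hh; ring. }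
  assert (Hx00 : xt 0 = x0) by (unfold xt; vs2 x0 h; ring).
  assert (HAx : forall t, - d0 < t < d0 -> A (xt t)) by exact HA.
  assert (FM : forall s t, 0 < s -> s <= t -> t < d0 -> K (vadd (vsub (q t) (q s)) (vscal (e t) k0))).
  { intros s t Hs Hst Htd.
    set (l := s / t).
    assert (Hl : 0 <= l <= 1).
    { unfold l; split. unfold Rdiv; apply Rmult_le_pos; [lra|left; apply Rinv_0_lt_compat; lra].
      apply Rmult_le_reg_r with t; [lra|]. unfold Rdiv; rewrite Rmult_assoc, Rinv_l; lra. }
    pose proof (Hpc (xt t) (xt 0) l (HAx t ltac:(lra)) (HAx 0 ltac:(lra)) Hl) as W.
    unfold cone_le in W. rewrite Hcomb, Hdist in W.
    replace (l * t + (1 - l) * 0) with s in W by (unfold l; field; lra).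
    rewrite Hx00 in W. replace (t - 0) with t in W by ring. rewrite Rabs_pos_eq in W by lra.
    set (g := C * Rmin l (1 - l) * alpha t) in W.
    assert (Hg : g / s <= e t).
    { assert (Rmin l (1-l) * alpha t <= l * alpha t) by (apply Rmult_le_compat_r; [apply Ha0; lra|apply Rmin_l]).
      assert (C * (Rmin l (1-l) * alpha t) <= C * (l * alpha t)) by (apply Rmult_le_compat_l; auto).
      assert (g / s <= C * (l * alpha t) / s).
      { unfold Rdiv. apply Rmult_le_compat_r; [left; apply Rinv_0_lt_compat; lra|]. unfold g. rewrite Rmult_assoc. lra. }
      replace (C * (l * alpha t) / s) with (e t) in H1 by (unfold e, l; field; lra). auto. }
    apply (Kcomb Y K k0 _ _ (/s) (e t - g / s) Hcone Kk0 W); [left; apply Rinv_0_lt_compat; lra|lra|].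
    unfold q. vs4 (F (xt t)) (F x0) (F (xt s)) k0; unfold l; field; lra. }
  set (tau := d0 / 2).
  assert (Htau : 0 < tau) by (unfold tau; lra).
  set (L := vsub (vscal (/tau) (vsub (F x0) (F (xt (- tau))))) (vscal (C * alpha (2*tau) / tau) k0)).
  assert (FB : forall s, 0 < s <= tau -> K (vsub (q s) L)).
  { intros s [Hs Hst].
    set (l := s / (s + tau)).
    assert (Hl : 0 <= l <= 1).
    { unfold l; split. unfold Rdiv; apply Rmult_le_pos; [lra|left; apply Rinv_0_lt_compat; lra].
      apply Rmult_le_reg_r with (s+tau); [lra|]. unfold Rdiv; rewrite Rmult_assoc, Rinv_l; lra. }
    pose proof (Hpc (xt (-tau)) (xt s) l (HAx (-tau) ltac:(unfold tau; lra)) (HAx s ltac:(unfold tau in *; lra)) Hl) as W.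
    unfold cone_le in W. rewrite Hcomb, Hdist in W.
    replace (l * - tau + (1 - l) * s) with 0 in W by (unfold l; field; lra).
    rewrite Hx00 in W. replace (Rabs (- tau - s)) with (tau + s) in W by (rewrite Rabs_left; lra).
    set (g := C * Rmin l (1 - l) * alpha (tau + s)) in W.
    assert (Hg : g * ((s + tau) / (s * tau)) <= C * alpha (2 * tau) / tau).
    { assert (alpha (tau + s) <= alpha (2 * tau)) by (apply Hamono; lra).
      assert (0 <= alpha (tau + s)) by (apply Ha0; lra).
      assert (Rmin l (1-l) * alpha (tau + s) <= l * alpha (2 * tau)).
      { apply Rmult_le_compat; auto. apply Rmin_glb; lra. apply Rmin_l. }
      assert (g <= C * (l * alpha (2 * tau))) by (unfold g; rewrite Rmult_assoc; apply Rmult_le_compat_l; auto).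
      assert (0 <= (s + tau) / (s * tau)).
      { unfold Rdiv; apply Rmult_le_pos; [lra|]. left; apply Rinv_0_lt_compat; nra. }
      apply Rmult_le_compat_r with (r := (s + tau) / (s * tau)) in H2; auto.
      replace (C * (l * alpha (2 * tau)) * ((s + tau) / (s * tau))) with (C * alpha (2 * tau) / tau) in H2
        by (unfold l; field; lra). auto. }
    apply (Kcomb Y K k0 _ _ ((s + tau) / (s * tau)) (C * alpha (2 * tau) / tau - g * ((s + tau) / (s * tau))) Hcone Kk0 W).
    { unfold Rdiv; apply Rmult_le_pos; [lra|]. left; apply Rinv_0_lt_compat; nra. }
    { lra. }
    unfold q, L. vs4 (F (xt (- tau))) (F (xt s)) (F x0) k0; unfold l; field; lra. }
  assert (pp : forall n, 0 < (/2)^n / (C+1)).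
  { intros n. apply Rdiv_lt_0_compat; [apply pow_lt; lra|lra]. }
  pose (Dn := fun n => proj1_sig (constructive_indefinite_description _ (Halim _ (pp n)))).
  assert (HD : forall n, 0 < Dn n /\ forall t, 0 < t < Dn n -> Rabs (alpha t / t) < (/2)^n / (C+1))
    by (intros n; exact (proj2_sig (constructive_indefinite_description _ (Halim _ (pp n))))).
  assert (HDp : forall n, 0 < Dn n) by (intros n; apply HD).
  pose (tt := tseq tau Dn).
  assert (Htt : forall n, 0 < tt n /\ tt n < Dn n /\ tt n <= tau * (/2)^(S n) /\ tt (S n) < tt n)
    by (intros n; exact (tseq_props tau Dn Htau HDp n)).
  assert (Htt_tau : forall n, tt n <= tau).
  { intros n. destruct (Htt n) as [_ [_ [H3 _]]]. simpl in H3.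
    pose proof (pow_le (/2) n). assert ((/2)^n <= 1) by (apply pow_half_le1).
    assert (tau * (/2 * (/2)^n) <= tau) by nra. lra. }
  assert (Hett : forall n, 0 <= e (tt n) <= (/2)^n).
  { intros n. destruct (Htt n) as [T1 [T2 _]]. split; [apply He0; auto|].
    pose proof (proj2 (HD n) (tt n) (conj T1 T2)).
    assert (e (tt n) <= C * ((/2)^n / (C+1))).
    { unfold e. apply Rmult_le_compat_l; auto. eapply Rle_trans; [apply Rle_abs|lra]. }
    assert (C * ((/2)^n / (C+1)) <= (/2)^n).
    { pose proof (pow_le (/2) n). replace (C * ((/2)^n / (C+1))) with ((/2)^n * (C / (C+1))) by (field; lra).
      assert (C / (C+1) <= 1). { apply Rmult_le_reg_r with (C+1); [lra|]. unfold Rdiv; rewrite Rmult_assoc, Rinv_l; lra. }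
      assert (0 <= C / (C+1)) by (unfold Rdiv; apply Rmult_le_pos; [lra|left; apply Rinv_0_lt_compat; lra]).
      nra. }
    lra. }
  pose (u := fun n => q (tt n)).
  assert (WC : weakly_cauchy u).
  { apply (weak_cauchy_lemma Y K c u k0 L (fun n => e (tt n)) Hcone Hc Hnorm Kk0 Hett).
    - intros n. unfold u. destruct (Htt n) as [_ [_ [_ T4]]]. destruct (Htt (S n)) as [T1 _].
      apply FM; try lra. pose proof (Htt_tau n). unfold tau in H; lra.
    - intros n. unfold u. apply FB. split; [apply Htt|apply Htt_tau]. }
  destruct (HW u WC) as [d Hd].
  exists d.
  assert (Hd' : forall f, cont_lin_functional f -> Un_cv (fun n => f (q (tt n))) (f d)) by exact Hd.
  assert (Httd : forall n, tt n < d0) by (intros n; pose proof (Htt_tau n); unfold tau in *; lra).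
  assert (Ca : forall t, 0 < t <= tau -> K (vsub (vadd (q t) (vscal (e t) k0)) d)).
  { intros t [Ht Htt0]. apply NNPP. intro Nz.
    destruct (closed_gap Y K _ Hcl Nz) as [rho [Hrho Hg]].
    set (z := vsub (vadd (q t) (vscal (e t) k0)) d) in *.
    destruct (separation Y (fun w => exists k, K k /\ w = vsub k z) rho Hrho) as [f [Hf Hsep]].
    - exists (vsub vzero z); exists vzero; auto.
    - intros z1 z2 l [k1 [K1 ->]] [k2 [K2 ->]] Hl. exists (vadd (vscal l k1) (vscal (1-l) k2)).
      split. apply Kadd; apply Kscal; auto; lra. vs3 k1 k2 z; ring.
    - intros w [k [Kk ->]]. auto.
    - destruct (Hd' f Hf rho Hrho) as [N1 HN1].
      destruct (tseq_to0 tau Dn Htau HDp t Ht) as [N2 HN2].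
      set (n := max N1 N2).
      specialize (HN1 n ltac:(unfold n; lia)). specialize (HN2 n ltac:(unfold n; lia)).
      assert (Kw : K (vsub (vadd (q t) (vscal (e t) k0)) (q (tt n)))).
      { replace (vsub (vadd (q t) (vscal (e t) k0)) (q (tt n))) with (vadd (vsub (q t) (q (tt n))) (vscal (e t) k0))
          by (vs3 (q t) (q (tt n)) k0; ring).
        apply FM; try lra. apply Htt. fold tt in HN2. lra. unfold tau in *; lra. }
      pose proof (Hsep _ (ex_intro _ _ (conj Kw eq_refl))).
      replace (vsub (vsub (vadd (q t) (vscal (e t) k0)) (q (tt n))) z) with (vsub d (q (tt n))) in H
        by (unfold z; vs4 (q t) k0 (q (tt n)) d; ring).
      rewrite clf_sub in H; auto. unfold Rdist in HN1. cbv beta in HN1. pose proof (Rle_abs (f d - f (q (tt n)))). rewrite Rabs_minus_sym in H0. lra. }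
  intros eps Heps.
  set (rho := eps / (2 * c)).
  assert (Hrho : 0 < rho) by (unfold rho; apply Rdiv_lt_0_compat; lra).
  set (Dset := fun v => exists m, 0 < m /\ forall s, 0 < s < m -> K (vsub v (vsub (q s) d))).
  assert (Mem : forall t, 0 < t <= tau -> Dset (vadd (vsub (q t) d) (vscal (e t) k0))).
  { intros t [Ht1 Ht2]. exists t. split; auto. intros s [Hs1 Hs2].
    replace (vsub (vadd (vsub (q t) d) (vscal (e t) k0)) (vsub (q s) d)) with (vadd (vsub (q t) (q s)) (vscal (e t) k0))
      by (vs4 (q t) d k0 (q s); ring).
    apply FM; try lra. unfold tau in *; lra. }
  assert (Small : exists v, Dset v /\ vnorm v < rho).
  { apply NNPP. intro N.
    destruct (separation Y Dset rho Hrho) as [f [Hf Hsep]].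
    - exists (vadd (vsub (q (tt 0%nat)) d) (vscal (e (tt 0%nat)) k0)). apply Mem. split; [apply Htt|apply Htt_tau].
    - intros v1 v2 l [m1 [Hm1 H1]] [m2 [Hm2 H2]] Hl. exists (Rmin m1 m2). split.
      { unfold Rmin; destruct Rle_dec; lra. }
      intros s Hs. assert (0 < s < m1) by (pose proof (Rmin_l m1 m2); lra).
      assert (0 < s < m2) by (pose proof (Rmin_r m1 m2); lra).
      replace (vsub (vadd (vscal l v1) (vscal (1 - l) v2)) (vsub (q s) d)) with
        (vadd (vscal l (vsub v1 (vsub (q s) d))) (vscal (1-l) (vsub v2 (vsub (q s) d))))
        by (vs4 v1 v2 (q s) d; ring).
      apply Kadd; apply Kscal; try lra; auto.
    - intros v Dv. destruct (Rle_dec rho (vnorm v)); auto. exfalso; apply N; exists v; split; auto; lra.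
    - pose proof Hf as [Hfa [Hfh _]].
      destruct (Hd' f Hf (rho/2)) as [N1 HN1]; [lra|].
      destruct (pow_half_small (rho / (2 * (Rabs (f k0) + 1)))) as [N2 HN2].
      { apply Rdiv_lt_0_compat; [lra|]. pose proof (Rabs_pos (f k0)); lra. }
      set (n := max N1 N2).
      specialize (HN1 n ltac:(unfold n; lia)). specialize (HN2 n ltac:(unfold n; lia)).
      unfold Rdist in HN1; cbv beta in HN1.
      pose proof (Hsep _ (Mem (tt n) (conj (proj1 (Htt n)) (Htt_tau n)))).
      rewrite Hfa, clf_sub, Hfh in H; auto.
      pose proof (Rle_abs (f (q (tt n)) - f d)).
      pose proof (Hett n) as [E1 E2].
      assert (e (tt n) * f k0 <= (/2)^n * Rabs (f k0)).
      { eapply Rle_trans; [apply Rle_abs|]. rewrite Rabs_mult, (Rabs_pos_eq (e _)); auto.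
        apply Rmult_le_compat_r; auto. apply Rabs_pos. }
      assert ((/2)^n * Rabs (f k0) < rho / 2).
      { pose proof (Rabs_pos (f k0)).
        apply Rmult_lt_compat_r with (r := Rabs (f k0) + 1) in HN2; [|lra].
        replace (rho / (2 * (Rabs (f k0) + 1)) * (Rabs (f k0) + 1)) with (rho/2) in HN2 by (field; lra).
        pose proof (pow_le (/2) n). nra. }
      lra. }
  destruct Small as [v [[m [Hm Hvm]] Hv]].
  set (A0 := vnorm k0).
  assert (HA0 : 0 <= A0) by apply vnorm_ge0.
  set (eps' := eps / (2 * (c + 1) * (A0 + 1) * (C + 1))).
  assert (Heps' : 0 < eps') by (unfold eps'; apply Rdiv_lt_0_compat; [lra|]; repeat apply Rmult_lt_0_compat; lra).
  destruct (Halim eps' Heps') as [de [Hde Hde2]].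
  exists (Rmin (Rmin m tau) de). split.
  { unfold Rmin; repeat destruct Rle_dec; lra. }
  intros s [Hs Hsd].
  assert (Hsm : s < m) by (pose proof (Rmin_l (Rmin m tau) de); pose proof (Rmin_l m tau); lra).
  assert (Hst : s < tau) by (pose proof (Rmin_l (Rmin m tau) de); pose proof (Rmin_r m tau); lra).
  assert (Hse : s < de) by (pose proof (Rmin_r (Rmin m tau) de); lra).
  change (vnorm (vsub (q s) d) < eps).
  set (x := vadd (vsub (q s) d) (vscal (e s) k0)).
  set (yv := vadd v (vscal (e s) k0)).
  assert (Kx : K x).
  { replace x with (vsub (vadd (q s) (vscal (e s) k0)) d) by (unfold x; vs3 (q s) d k0; ring).
    apply Ca; lra. }
  assert (Kyx : K (vsub yv x)).
  { replace (vsub yv x) with (vsub v (vsub (q s) d)) by (unfold yv, x; vs4 v (q s) d k0; ring).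
    apply Hvm; lra. }
  assert (Hxn : vnorm x <= c * vnorm yv).
  { apply Hnorm; unfold cone_le; auto.
    replace (vsub x vzero) with x by (vs1 x; ring). auto. }
  pose proof (He0 s Hs) as Hes.
  assert (Hyn : vnorm yv <= vnorm v + e s * A0).
  { unfold yv. eapply Rle_trans; [apply vnorm_triangle|]. rewrite vnorm_scal, Rabs_pos_eq; auto. unfold A0; lra. }
  assert (Hqn : vnorm (vsub (q s) d) <= vnorm x + e s * A0).
  { replace (vsub (q s) d) with (vadd x (vscal (- e s) k0)) by (unfold x; vs3 (q s) d k0; ring).
    eapply Rle_trans; [apply vnorm_triangle|]. rewrite vnorm_scal, Rabs_Ropp, Rabs_pos_eq; auto. unfold A0; lra. }
  assert (Hes2 : e s <= C * eps').
  { unfold e. apply Rmult_le_compat_l; auto. eapply Rle_trans; [apply Rle_abs|]. left; apply Hde2; lra. }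
  assert (Hcv : c * vnorm v <= c * rho) by (apply Rmult_le_compat_l; lra).
  assert (c * rho = eps / 2) by (unfold rho; field; lra).
  assert (Hk : (c + 1) * (e s * A0) <= eps / 2).
  { assert (e s * A0 <= C * eps' * A0) by (apply Rmult_le_compat_r; auto).
    assert (C * eps' * A0 * (c+1) = eps / 2 * (C / (C+1)) * (A0 / (A0 + 1))) by (unfold eps'; field; lra).
    assert (C / (C+1) <= 1). { apply Rmult_le_reg_r with (C+1); [lra|]. unfold Rdiv; rewrite Rmult_assoc, Rinv_l; lra. }
    assert (0 <= C / (C+1)) by (unfold Rdiv; apply Rmult_le_pos; [lra|left; apply Rinv_0_lt_compat; lra]).
    assert (A0 / (A0+1) <= 1). { apply Rmult_le_reg_r with (A0+1); [lra|]. unfold Rdiv; rewrite Rmult_assoc, Rinv_l; lra. }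
    assert (0 <= A0 / (A0+1)) by (unfold Rdiv; apply Rmult_le_pos; [lra|left; apply Rinv_0_lt_compat; lra]).
    assert (eps / 2 * (C / (C+1)) * (A0 / (A0 + 1)) <= eps / 2).
    { assert (C / (C+1) * (A0 / (A0 + 1)) <= 1) by nra. nra. }
    nra. }
  assert (c * vnorm yv <= c * vnorm v + c * (e s * A0)) by (pose proof (Rmult_le_compat_l c _ _ ltac:(lra) Hyn); lra).
  assert (c * vnorm v < eps / 2).
  { apply Rmult_lt_compat_l with (r := c) in Hv; lra. }
  nra.
Qed.
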